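(* Let $G$ be a $P_5$-free graph and let $C\subseteq V(G)$. Suppose $C$ is partitioned into independent sets $C_1,\dots,C_k$ of $G$, and let $D\subseteq C$ be a set such that $G[D]$ is connected, every vertex of $C$ is in $D$ or has a neighbor in $D$, and $D\cap C_r\neq\emptyset$ for every $r\in\{1,\dots,k\}$. Let $X := N(C)\setminus N(D)$ and $Y := V(G)\setminus N[C]$. Then there is no edge of $G$ with one endpoint in $X$ and the other in $Y$.
   Context: For $A\subseteq V(G)$, $N(A)$ is the set of vertices outside $A$ having a neighbor in $A$ (open neighborhood), and $N[A]=A\cup N(A)$. A graph is $P_5$-free if it has no induced path on 5 vertices. *)

(* Defs.v *)
From mathcomp Require Import all_boot.
Set Implicit Arguments. Unset Strict Implicit. Unset Printing Implicit Defensive.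

Section Graphs.
Variable T : finType.
Variable e : rel T.

Definition simple_graph : Prop := symmetric e /\ irreflexive e.

Definition nbh (A : {set T}) : {set T} :=
  [set v | (v \notin A) && [exists u in A, e v u]].

Definition cnbh (A : {set T}) : {set T} := A :|: nbh A.

Definition independent (A : {set T}) : Prop :=
  forall x y, x \in A -> y \in A -> ~~ e x y.

Definition induced_connected (D : {set T}) : Prop :=
  D != set0 /\
  forall x y, x \in D -> y \in D ->
    connect [rel a b | [&& a \in D, b \in D & e a b]] x y.

Definition P5_free : Prop :=
  ~ exists f : 'I_5 -> T, injective f /\
      forall i j : 'I_5, e (f i) (f j) = ((i.+1 == j) || (j.+1 == i)).

Definition is_partition (k : nat) (C : {set T}) (Cs : 'I_k -> {set T}) : Prop :=
  (\bigcup_(r < k) Cs r = C) /\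
  (forall r s : 'I_k, r != s -> [disjoint Cs r & Cs s]).
End Graphs.

(* Main.v *)
Require Import Defs.
From mathcomp Require Import all_boot.

Lemma connect_cross (T : finType) (r : rel T) (P : pred T) a b :
  connect r a b -> P a -> ~~ P b -> exists u w, [&& r u w, P u & ~~ P w].
Proof.
move/connectP=> [p]; elim: p a => [|z p IH] a /=.
  by move=> _ -> Pa; rewrite Pa.
move/andP=> [raz pz] Eb Pa nPb.
case Pz: (P z); first exact: (IH z pz Eb Pz nPb).
by exists a, z; rewrite raz Pa Pz.
Qed.

Theorem claim4p3 (T : finType) (e : rel T) (C D : {set T}) (k : nat)
    (Cs : 'I_k -> {set T}) :
  simple_graph e -> P5_free e ->
  is_partition C Cs ->
  (forall r, independent e (Cs r)) ->
  D \subset C ->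
  induced_connected e D ->
  C \subset cnbh e D ->
  (forall r, D :&: Cs r != set0) ->
  forall x y, x \in nbh e C :\: nbh e D -> y \in ~: cnbh e C -> ~~ e x y.
Proof.
rewrite /cnbh /nbh.
move=> [sym irr] P5 [UC _] indep sDC [_ conD] sCN meet x y.
rewrite !inE negb_and negbK => /andP [xnD /andP [xnC /existsP [c /andP [cC exc]]]].
rewrite negb_or => /andP [ynC ynN].
apply/negP => exy.
have yNC : forall v, v \in C -> e y v = false.
  move=> v vC; apply/negbTE/negP => eyv; move: ynN; rewrite ynC /=.
  by move/negP; apply; apply/existsP; exists v; rewrite vC eyv.
have xnD' : x \notin D by apply/negP => /(subsetP sDC); rewrite (negbTE xnC).
have xND : forall v, v \in D -> e x v = false.
  move=> v vD; apply/negbTE/negP => exv; move: xnD; rewrite (negbTE xnD') /=.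
  by move/negP; apply; apply/existsP; exists v; rewrite vD exv.
have cnD : c \notin D by apply/negP => cD; rewrite xND in exc.
have := subsetP sCN c cC; rewrite !inE (negbTE cnD) /= => /existsP [d /andP [dD ecd]].
move: cC; rewrite -UC => /bigcupP [r _ cr].
have /set0Pn [d' ] := meet r; rewrite inE => /andP [d'D d'r].
have necd' : ~~ e c d' := indep r c d' cr d'r.
have := @connect_cross _ _ (fun v => e c v) _ _ (conD _ _ dD d'D) ecd necd'.
move=> [u [w /and3P [/and3P [uD wD euw] ecu necw]]].
have uC := subsetP sDC u uD; have wC := subsetP sDC w wD.
have cC : c \in C by rewrite -UC; apply/bigcupP; exists r.
apply: P5.
exists (fun i : 'I_5 => nth y [:: y; x; c; u; w] i); split.
  have Hu : uniq [:: y; x; c; u; w].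
    rewrite /= !inE !negb_or.
    have ne : forall a b, a \in C -> b \notin C -> (b == a) = false.
      by move=> a b aC bC; apply/negbTE/eqP => E; rewrite E aC in bC.
    rewrite (ne c y) // (ne u y) // (ne w y) // (ne c x) // (ne u x) // (ne w x) //.
    have -> : (y == x) = false by apply/negbTE/eqP => E; rewrite E irr in exy.
    have -> : (c == u) = false by apply/negbTE/eqP => E; rewrite E uD in cnD.
    have -> : (c == w) = false by apply/negbTE/eqP => E; rewrite E wD in cnD.
    have -> : (u == w) = false by apply/negbTE/eqP => E; rewrite E irr in euw.
    by [].
  by move=> i j /eqP; rewrite nth_uniq // => /eqP; apply: val_inj.
have Eyc := yNC c cC; have Eyu := yNC u uC; have Eyw := yNC w wC.
have Exu := xND u uD; have Exw := xND w wD.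
have Ecw := negbTE necw.
have Eyx : e y x by rewrite sym.
move=> [[|[|[|[|[|i]]]]] Hi] [[|[|[|[|[|j]]]]] Hj] //=;
  try by [rewrite ?irr ?Eyc ?Eyu ?Eyw ?Exu ?Exw ?Ecw ?Eyx ?exc ?ecu ?euw
         | rewrite sym ?irr ?Eyc ?Eyu ?Eyw ?Exu ?Exw ?Ecw ?Eyx ?exc ?ecu ?euw].
Qed.
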